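(* There is a constant $c_1>0$ such that for all sufficiently large $N$ there exists a non-feasible pair $(N,M)$ for the family of line graphs of acyclic graphs, and the smallest such $M$ satisfies $M \leq \frac{N^2}{2} - c_1N\sqrt{N}$.
   Context: All graphs are finite and simple; $L(F)$ is the line graph of $F$. For integers $N \ge 1$ and $0\le M\le\binom{N}{2}$, the pair $(N,M)$ is feasible for the family of line graphs of acyclic graphs if there is an acyclic graph $F$ with $N$ edges such that $L(F)$ has exactly $M$ edges; otherwise it is non-feasible. *)

(* Defs.v *)
From mathcomp Require Import all_boot.
Set Implicit Arguments. Unset Strict Implicit. Unset Printing Implicit Defensive.

Definition simple_graph (n : nat) (e : rel 'I_n) : Prop :=
  symmetric e /\ irreflexive e.

Definition acyclic (n : nat) (e : rel 'I_n) : Prop :=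
  forall c : seq 'I_n, 3 <= size c -> ~ ucycle e c.

Definition edges (n : nat) (e : rel 'I_n) : {set {set 'I_n}} :=
  [set E : {set 'I_n} | [exists x : 'I_n, exists y : 'I_n, e x y && (E == [set x; y])]].

Definition line_graph_edges (n : nat) (e : rel 'I_n) : {set {set {set 'I_n}}} :=
  [set P : {set {set 'I_n}} | [exists E1 in edges e, exists E2 in edges e,
     [&& E1 != E2, E1 :&: E2 != set0 & P == [set E1; E2]]]].

Definition feasible (N M : nat) : Prop :=
  exists (n : nat) (e : rel 'I_n),
    simple_graph e /\ acyclic e /\
    #|edges e| = N /\ #|line_graph_edges e| = M.

Definition non_feasible (N M : nat) : Prop :=
  M <= 'C(N, 2) /\ ~ feasible N M.

(* Main.v *)
Require Import Defs.
From mathcomp Require Import all_boot.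
From Stdlib Require Import Reals.
From mathcomp Require Import zify.
From Stdlib Require Import Classical.
Set Implicit Arguments. Unset Strict Implicit. Unset Printing Implicit Defensive.

Section G.
Variable n : nat.
Variable e : rel 'I_n.
Hypothesis esym : symmetric e.
Hypothesis eirr : irreflexive e.

Definition nbr v := [set y | e v y].
Definition deg v := #|nbr v|.

Lemma in_edges E : reflect (exists x y, e x y /\ E = [set x; y]) (E \in edges e).
Proof.
rewrite inE; apply: (iffP existsP) => [[x /existsP [y /andP [h /eqP ->]]]|[x [y [h ->]]]].
  by exists x, y.
by exists x; apply/existsP; exists y; rewrite h eqxx.
Qed.

Lemma edge_at x y v : e x y -> v \in [set x; y] -> exists u, e v u /\ [set x; y] = [set v; u].
Proof.
move=> h; rewrite !inE => /orP [/eqP ->|/eqP ->]; first by exists y.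
by exists x; rewrite esym h setUC.
Qed.

Lemma set2_inj (v x y : 'I_n) : v != x -> [set v; x] = [set v; y] -> x = y.
Proof.
move=> vx h; have : x \in [set v; y] by rewrite -h !inE eqxx orbT.
rewrite !inE => /orP [/eqP xv|/eqP //]; by rewrite xv eqxx in vx.
Qed.

Definition K v := [set A : {set 'I_n} | A \subset nbr v & #|A| == 2].
Definition fv v (A : {set 'I_n}) := [set [set v; x] | x in A].

Lemma card_K v : #|K v| = 'C(deg v, 2).
Proof. exact: cards_draws. Qed.

Lemma card_bigcup_le (I : finType) (T : finType) (F : I -> {set T}) :
  #|\bigcup_(i : I) F i| <= \sum_(i : I) #|F i|.
Proof.
elim/big_rec2: _ => [|i x y _ h]; first by rewrite cards0.
by apply: leq_trans (leq_card_setU _ _) _; rewrite leq_add2l.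
Qed.

Lemma fv2 v x y : fv v [set x; y] = [set [set v; x]; [set v; y]].
Proof. by rewrite /fv imsetU1 imset_set1. Qed.

Lemma LG_sub : line_graph_edges e \subset \bigcup_(v : 'I_n) (fv v @: K v).
Proof.
apply/subsetP => P; rewrite inE => /existsP [E1 /andP [h1 /existsP [E2 /andP [h2 /and3P [ne nI /eqP ->]]]]].
case/set0Pn: nI => v; rewrite inE => /andP [v1 v2].
case/in_edges: h1 => x1 [y1 [ex1 dE1]]; case/in_edges: h2 => x2 [y2 [ex2 dE2]].
subst E1 E2.
case: (edge_at ex1 v1) => u1 [eu1 E1]; rewrite E1 in ne *.
case: (edge_at ex2 v2) => u2 [eu2 E2]; rewrite E2 in ne *.
apply/bigcupP; exists v => //; apply/imsetP; exists [set u1; u2]; last by rewrite fv2.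
rewrite inE; apply/andP; split.
  by apply/subsetP => z; rewrite !inE => /orP [/eqP ->|/eqP ->].
rewrite cards2; have -> // : u1 != u2.
by apply: contraNneq ne => ->.
Qed.

Lemma card_LG_le : #|line_graph_edges e| <= \sum_(v : 'I_n) 'C(deg v, 2).
Proof.
apply: leq_trans (subset_leq_card LG_sub) _.
apply: leq_trans (card_bigcup_le _) _.
by apply: leq_sum => v _; rewrite -card_K; apply: leq_imset_card.
Qed.

Lemma fv_mem v (A : {set 'I_n}) x : A \subset nbr v -> (x \in A) = ([set v; x] \in fv v A).
Proof.
move=> sA; apply/idP/imsetP => [xA|[y yA E]]; first by exists x.
have vy : v != y by apply: contraTneq (subsetP sA y yA) => <-; rewrite inE eirr.
have vx : v != x.
  apply: contra_neq vy => vx; subst x.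
  have : y \in [set v; v] by rewrite E !inE eqxx orbT.
  by rewrite !inE orbb => /eqP.
by rewrite (set2_inj vx E).
Qed.

Lemma card_LG_ge v : 'C(deg v, 2) <= #|line_graph_edges e|.
Proof.
rewrite -card_K -(@card_in_imset _ _ (fv v)); last first.
  move=> A B; rewrite !inE => /andP [sA _] /andP [sB _] E.
  apply/setP => x; rewrite (fv_mem x sA) (fv_mem x sB) E //.
apply: subset_leq_card; apply/subsetP => P /imsetP [A].
rewrite inE => /andP [sA /cards2P [x [y [xy dA]]]] ->; rewrite dA in sA *.
have ex : e v x by move: (subsetP sA x (set21 _ _)); rewrite inE.
have ey : e v y by move: (subsetP sA y (set22 _ _)); rewrite inE.
rewrite fv2 inE; apply/existsP; exists [set v; x]; apply/andP; split.
  by apply/in_edges; exists v, x.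
apply/existsP; exists [set v; y]; apply/andP; split.
  by apply/in_edges; exists v, y.
apply/and3P; split => //.
- apply: contra_neq xy => E; apply: set2_inj E.
  by apply: contraTneq ex => <-; rewrite eirr.
- by apply/set0Pn; exists v; rewrite !inE eqxx.
Qed.

Lemma classical_max (P : nat -> Prop) B k0 : P k0 -> (forall k, P k -> k <= B) ->
  exists k, P k /\ forall j, P j -> j <= k.
Proof.
move=> Pk0 hB.
suff: forall d k, B - k <= d -> P k -> exists k, P k /\ forall j, P j -> j <= k.
  by move/(_ (B - k0) k0 (leqnn _) Pk0).
elim => [|d IH] k hd Pk.
  exists k; split => // j Pj; have := hB _ Pj; have := hB _ Pk; lia.
case: (classic (exists j, P j /\ k < j)) => [[j [Pj kj]]|nj].
  apply: (IH j) => //; have := hB _ Pj; lia.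
exists k; split => // j Pj; case: (leqP j k) => // kj; case: nj; by exists j.
Qed.

Hypothesis eacyc : acyclic e.

Lemma leaf x0 y0 : e x0 y0 -> exists v w, e v w /\ nbr v = [set w].
Proof.
move=> e0.
pose Q k := exists x p, size p = k /\ path e x p /\ uniq (x :: p).
have Q1 : Q 1 by exists x0, [:: y0]; rewrite /= e0 !inE; split => //; split => //;
  rewrite andbT; apply: contraTneq e0 => ->; rewrite eirr.
have QB k : Q k -> k <= n.
  case=> x [p [<- [_ u]]]; have := card_uniqP u; move=> /= h.
  have := max_card (mem (x :: p)); rewrite card_ord h /=; lia.
case: (classical_max Q1 QB) => k [[x [p [sp [pp up]]]] kmax].
case: p sp pp up => [|y p] sp pp up; first by move: (kmax _ Q1); rewrite -sp.
have exy : e x y by case/andP: pp.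
exists x, y; split => //; apply/setP => z; rewrite !inE.
apply/idP/eqP => [exz|->] //.
case: (boolP (z \in x :: y :: p)) => [zin|znot]; last first.
  have : Q k.+1.
    exists z, (x :: y :: p); split; first by rewrite -sp.
    by rewrite /= esym exz; rewrite /= in pp; rewrite pp; move: up znot; rewrite /= => -> ->.
  by move/kmax; rewrite ltnn.
move: zin; rewrite inE => /orP [/eqP zx|zin]; first by rewrite zx eirr in exz.
apply/eqP; apply/negPn/negP => zy.
have zp : z \in p by move: zin; rewrite inE (negbTE zy).
case/path.splitP: zp pp up => p1 p2 pp up.
exfalso; apply: (eacyc (c := [:: x, y & rcons p1 z])).
  by rewrite /= size_rcons.
have pp1 : path e x (y :: rcons p1 z) by move: pp; rewrite -cat_cons cat_path => /andP [].
have up1 : uniq (x :: y :: rcons p1 z) by move: up; rewrite -2!cat_cons cat_uniq => /andP [].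
rewrite /ucycle up1 andbT /cycle -rcons_cons rcons_path pp1 /=.
by rewrite last_rcons esym exz.
Qed.
End G.

Definition rem n (e : rel 'I_n) v : rel 'I_n := fun x y => [&& e x y, x != v & y != v].

Lemma deg0 n (e : rel 'I_n) u : #|edges e| = 0 -> deg e u = 0.
Proof.
move=> h; apply/eqP; rewrite cards_eq0; apply/eqP/setP => y; rewrite !inE.
apply/negbTE/negP => euy.
have : 0 < #|edges e| by apply/card_gt0P; exists [set u; y]; apply/in_edges; exists u, y.
by rewrite h.
Qed.

Lemma forest_sum N : forall n (e : rel 'I_n), symmetric e -> irreflexive e -> acyclic e ->
  #|edges e| = N -> \sum_(u : 'I_n) (deg e u).-1 <= N.-1.
Proof.
elim: N => [|N IH] n e esym eirr eacyc hN.
  by rewrite big1 // => u _; rewrite deg0.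
have [E0 E0in] : exists E, E \in edges e.
  by apply/set0Pn; rewrite -card_gt0 hN.
case/in_edges: E0in => x0 [y0 [e0 _]].
case: (leaf esym eirr eacyc e0) => v [w [evw nv]].
have vw : v != w by apply: contraTneq evw => ->; rewrite eirr.
pose e' := rem e v.
have e'sym : symmetric e'.
  by move=> x y; rewrite /e' /rem esym (andbC (x != v)).
have e'irr : irreflexive e' by move=> x; rewrite /e' /rem eirr.
have e'sub : subrel e' e by move=> x y /and3P [].
have e'acyc : acyclic e'.
  move=> c sc /andP [cc uc]; apply: (eacyc c sc); apply/andP; split => //.
  exact: (sub_cycle e'sub cc).
have nbv y : e y v -> y = w.
  move=> eyv; have : y \in nbr e v by rewrite inE esym.
  by rewrite nv inE => /eqP.
have eE : edges e' = edges e :\ [set v; w].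
  apply/setP => E; rewrite in_setD1; apply/idP/idP.
    case/in_edges => x [y [/and3P [exy xv yv] ->]].
    rewrite andbC; apply/andP; split; first by apply/in_edges; exists x, y.
    apply: contraNneq xv => h; have : v \in [set x; y] by rewrite h set21.
    by rewrite !inE => /orP [/eqP ->|/eqP vy] //; rewrite vy eqxx in yv.
  case/andP => ne /in_edges [x [y [exy dE]]]; subst E.
  apply/in_edges; exists x, y; split => //; rewrite /e' /rem exy /=.
  apply/andP; split.
    apply: contra_neq ne => xv; subst x; have := nbv y; rewrite esym => /(_ exy) ->.
    by [].
  apply: contra_neq ne => yv; subst y; rewrite (nbv x exy) setUC.
  by [].
have hN' : #|edges e'| = N.
  have : [set v; w] \in edges e by apply/in_edges; exists v, w.
  by move=> h; move: hN; rewrite (cardsD1 [set v; w]) h eE add1n => -[].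
have IH' := IH n e' e'sym e'irr e'acyc hN'.
have hu u : u != w -> (deg e u).-1 <= (deg e' u).-1.
  move=> uw; case: (eqVneq u v) => [->|uv].
    by rewrite /deg nv cards1.
  suff: deg e u <= deg e' u by lia.
  apply: subset_leq_card; apply/subsetP => y; rewrite !inE => euy.
  rewrite /e' /rem euy uv /=; apply: contra_neq uw => yv; subst y.
  exact: nbv.
have hw : deg e w <= (deg e' w).+1.
  rewrite /deg; apply: (@leq_trans #|[set v] :|: nbr e' w|); last first.
    by apply: leq_trans (leq_card_setU _ _) _; rewrite cards1.
  apply: subset_leq_card; apply/subsetP => y; rewrite !inE => ewy.
  case: (eqVneq y v) => [->|yv]; first by [].
  by rewrite /e' /rem ewy yv eq_sym vw orbT.
rewrite (bigD1 w) //=.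
apply: (@leq_trans ((deg e' w) + \sum_(u < n | u != w) (deg e' u).-1)).
  by apply: leq_add; [lia | apply: leq_sum => u; apply: hu].
move: IH'; rewrite (bigD1 w) //=.
move: (\sum_(i < n | i != w) (deg e' i).-1) => s.
case: N {IH} hN hN' => [|N] hN hN'.
  by rewrite (deg0 w hN'); lia.
lia.
Qed.
Lemma arith a S T k m : a + S <= T -> a + k + 1 <= T -> m <= a -> m <= S ->
  k*k + 5*k + 4 < 2*T -> 4*k + 3 <= T -> a*(a+1) + S*(m+1) + 2 < (T-k)*(T-k+1).
Proof.
move=> h1 h2 h3 h4 h5 h6.
case: (leqP T (2*a)) => ha.
  have e1 : S*(m+1) <= (T-a)*(T-a+1) by apply: leq_mul; lia.
  have e2 : (T - k - 1 - a) * (a - (k+1)) >= 0 by [].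
  nia.
have e1 : S*(m+1) <= (T-a)*(a+1) by apply: leq_mul; lia.
nia.
Qed.

From Stdlib Require Import Lra Psatz.

Lemma bin2x d : 'C(d, 2) * 2 = d.-1 * (d.-1 + 1).
Proof.
elim: d => [|d IH] //; case: d IH => [|d] IH //.
rewrite binS bin1 mulnDl IH /=; lia.
Qed.

Lemma classical_min (P : nat -> Prop) m : P m ->
  exists j, P j /\ j <= m /\ forall j', j' < j -> ~ P j'.
Proof.
elim/ltn_ind: m => m IH Pm.
case: (classic (exists j', j' < m /\ P j')) => [[j' [jm Pj']]|nj].
  case: (IH j' jm Pj') => j [Pj [jj' h]]; exists j; split => //; split => //.
  exact: leq_trans jj' (ltnW jm).
exists m; split => //; split => // j' jm Pj'; apply: nj; by exists j'.
Qed.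

Lemma gap N k : 100 <= N -> k * k <= N -> N < k.+1 * k.+1 ->
  ~ feasible N ('C(N - k, 2) - 1).
Proof.
move=> HN hk1 hk2 [n [e [[esym eirr] [eacyc [hN hM]]]]].
have k10 : 10 * k <= N.
  case: (leqP 10 k) => hk; first by apply: leq_trans hk1; apply: leq_mul.
  lia.
have [E0 E0in] : exists E, E \in edges e.
  by apply/set0Pn; rewrite -card_gt0 hN; lia.
case/in_edges: E0in => i0 [y0 [e0 _]].
case: (@arg_maxnP _ i0 predT (deg e) isT) => c _ cmax.
have Cpos : 1 <= 'C(N - k, 2) by rewrite bin_gt0; lia.
case: (leqP (N - k) (deg e c)) => hc.
  have := card_LG_ge eirr c; rewrite hM.
  have := leq_bin2l 2 hc; lia.
pose x u := (deg e u).-1.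
have hsum := forest_sum esym eirr eacyc hN.
rewrite (bigD1 c) //= in hsum.
set S := \sum_(i < n | i != c) (deg e i).-1 in hsum.
pose m := minn (x c) S.
have xm u : u != c -> x u <= m.
  move=> uc; rewrite leq_min; apply/andP; split.
    by rewrite /x; have := cmax u isT; lia.
  by rewrite /S (bigD1 u) //= leq_addr.
have hup := card_LG_le esym.
have h2 : #|line_graph_edges e| * 2 <= x c * (x c + 1) + S * (m + 1).
  apply: leq_trans (leq_mul hup (leqnn 2)) _.
  rewrite big_distrl /= (bigD1 c) //= bin2x leq_add2l /S big_distrl /=.
  by apply: leq_sum => u uc; rewrite bin2x; apply: leq_mul => //; have := xm u uc; rewrite /x /m; lia.
have h3 := arith (a := x c) (S := S) (T := N - 1) (k := k) (m := m).
have := bin2x (N - k).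
rewrite hM in h2.
move: h2 h3 hsum; rewrite /m /x; lia.
Qed.

Theorem mainTheorem9 :
  exists c1 : R, (0 < c1)%R /\
  exists N0 : nat, forall N : nat, N0 <= N ->
    exists M : nat,
      non_feasible N M /\
      (forall M' : nat, M' < M -> ~ non_feasible N M') /\
      (INR M <= INR N ^ 2 / 2 - c1 * INR N * sqrt (INR N))%R.
Proof.
exists (1/4)%R; split; first lra.
exists 100 => N HN.
pose k := Nat.sqrt N.
have [hk1 hk2] : k * k <= N /\ N < k.+1 * k.+1.
  by have := Nat.sqrt_spec N; rewrite -/k; lia.
pose Ms := 'C(N - k, 2) - 1.
have nfs : non_feasible N Ms.
  split; last exact: gap.
  have := leq_bin2l 2 (leq_subr k N); rewrite /Ms; lia.
case: (classical_min nfs) => M [nfM [MMs Mmin]].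
exists M; split => //; split => //.
have k10 : 10 * k <= N.
  case: (leqP 10 k) => hk; first by apply: leq_trans hk1; apply: leq_mul.
  lia.
have Cpos : 1 <= 'C(N - k, 2) by rewrite bin_gt0; lia.
have hid : (2 * Ms + 2 + 2 * k * N + N = N * N + k * k + k)%N.
  have := bin2x (N - k); rewrite /Ms; nia.
have hidR : (2 * INR Ms + 2 + 2 * INR k * INR N + INR N = INR N * INR N + INR k * INR k + INR k)%R.
  have := f_equal INR hid; rewrite -!plusE -!multE !plus_INR !mult_INR.
  by rewrite (_ : INR 2 = 2%R) //; simpl; lra.
have hk1R : (INR k * INR k <= INR N)%R.
  by rewrite -mult_INR; apply: le_INR; apply/leP.
have hk2R : (INR N + 1 <= (INR k + 1) * (INR k + 1))%R.
  rewrite -S_INR -(S_INR k) -mult_INR; apply: le_INR; apply/leP; exact: hk2.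
have MR : (INR M <= INR Ms)%R by apply: le_INR; apply/leP.
have N1 : (100 <= INR N)%R.
  by rewrite (_ : 100%R = INR 100); [apply: le_INR; apply/leP | simpl; lra].
have k0 : (0 <= INR k)%R by apply: pos_INR.
have s0 := sqrt_pos (INR N).
have ss := sqrt_sqrt (INR N) (ltac:(lra)).
have sk : (sqrt (INR N) <= INR k + 1)%R by nra.
nra.
Qed.
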